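(* Let $F$ be an algebraically closed field of positive characteristic $p$. A rational function $\phi \in F(z)$ has no finite critical point if and only if its continued fraction expansion has the form \[ \phi(z) = [q_0(z^p), q_1(z^p), \ldots, q_n(z^p) + az] \] for some integer $n \geq 0$, polynomials $q_0, q_1, \ldots, q_n \in F[z]$, and a nonzero element $a \in F$.
   Context: Continued fraction expansion: for $\phi \in F(z)$, repeated use of the division algorithm gives unique polynomials $f_0, \ldots, f_n \in F[z]$, with $f_1, \ldots, f_n$ nonconstant ($f_0$ may be constant or zero), such that $\phi = f_0 + \cfrac{1}{f_1 + \cfrac{1}{\ddots + \cfrac{1}{f_n}}}$; this is written $\phi = [f_0, f_1, \ldots, f_n]$. Critical points: for $x \in F$, choose a fractional linear transformation $\sigma$ with coefficients in $F$ such that $\sigma(\phi(x)) \neq \infty$; $x$ is a finite critical point of $\phi$ if $\frac{d(\sigma\circ\phi)}{dz}(x) = 0$ (this is independent of the choice of $\sigma$). The point $\infty$ is a critical point if $\frac{d(\sigma \circ \phi(1/z))}{dz}\big|_{z=0} = 0$ for such a $\sigma$ with $\sigma(\phi(\infty)) \neq \infty$. *)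

(* Defs.v *)
From mathcomp Require Import all_boot all_algebra.
Set Implicit Arguments. Unset Strict Implicit. Unset Printing Implicit Defensive.
Import GRing.Theory.
Local Open Scope ring_scope.

Notation ratfun F := {fraction {poly F}}.

Definition polyF (F : fieldType) (f : {poly F}) : ratfun F := @FracField.tofrac _ f.

Fixpoint cf_value (F : fieldType) (s : seq {poly F}) : ratfun F :=
  match s with
  | [::] => 0
  | [:: f] => polyF f
  | f :: s' => polyF f + (cf_value s')^-1
  end.

Definition cf_expansion (F : fieldType) (phi : ratfun F) (s : seq {poly F}) : Prop :=
  [/\ (0 < size s)%N,
      forall i : nat, (0 < i < size s)%N -> (1 < size (nth 0%R s i))%N
    & phi = cf_value s].

Definition mobius_comp (F : fieldType) (a b c d : F) (phi : ratfun F) : ratfun F :=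
  (polyF a%:P * phi + polyF b%:P) / (polyF c%:P * phi + polyF d%:P).

(* x in F is a finite critical point of phi: for a fractional linear
   transformation sigma with coefficients in F with sigma(phi(x)) <> oo,
   i.e. sigma o phi = N/D with D(x) <> 0, the derivative
   d(sigma o phi)/dz at x, = (N'(x) D(x) - N(x) D'(x)) / D(x)^2, vanishes. *)
Definition finite_critical_point (F : fieldType) (phi : ratfun F) (x : F) : Prop :=
  exists (a b c d : F) (N D : {poly F}),
    [/\ a * d - b * c != 0,
        polyF c%:P * phi + polyF d%:P != 0,
        mobius_comp a b c d phi = polyF N / polyF D,
        D.[x] != 0
      & ((N^`()).[x] * D.[x] - N.[x] * (D^`()).[x]) / D.[x] ^+ 2 = 0].

Definition cf_form (F : fieldType) (p n : nat) (q : nat -> {poly F}) (a : F)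
  : seq {poly F} :=
  rcons [seq q i \Po 'X^p | i <- iota 0 n] (q n \Po 'X^p + a *: 'X).

(* Main.v *)
Require Import Defs.
From mathcomp Require Import all_boot all_algebra.
From mathcomp Require Import zify ring.
Import GRing.Theory.
Local Open Scope ring_scope.



Definition W (F : fieldType) (N D : {poly F}) := N^`() * D - N * D^`().
Arguments W {F}.

Lemma charp_poly (F : fieldType) (p : nat) (hp : p \in [pchar F])
   (P : {poly F}) (a : F) :
  P^`() = a%:P -> exists q : {poly F}, P = q \Po 'X^p + a *: 'X.
Proof.
move=> hP.
have p0 : (0 < p)%N by apply: prime_gt0; exact: pcharf_prime hp.
set Q := P - a *: 'X.
have hQ : Q^`() = 0 by rewrite /Q derivB derivZ derivX hP alg_polyC subrr.
exists (\poly_(i < size Q) Q`_(i * p)).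
apply: (@addIr _ (- (a *: 'X))); rewrite addrK -/Q.
apply/polyP => i; rewrite coef_comp_poly_Xn //.
case: ifP => hpi.
  rewrite coef_poly; case: ifP => hs; first by rewrite divnK.
  rewrite nth_default //. move/negbT: hs; rewrite -leqNgt => hs.
  apply: leq_trans hs _. by rewrite leq_div.
case: i hpi => [|j] hpi; first by rewrite dvdn0 in hpi.
have := congr1 (fun r : {poly F} => r`_j) hQ.
rewrite /= coef_deriv coef0 -mulr_natr => /eqP; rewrite mulf_eq0 => /orP [/eqP //|].
by rewrite -(dvdn_pcharf hp) hpi.
Qed.

Lemma cf_form_S (F : fieldType) p n (q : nat -> {poly F}) a :
  cf_form p n.+1 q a = (q 0%N \Po 'X^p) :: cf_form p n (fun i => q i.+1) a.
Proof.
rewrite /cf_form /= -{1}(addn0 1%N) iotaDl -map_comp.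
congr (_ :: rcons _ _).
Qed.

Lemma cf_value_cons (F : fieldType) (f : {poly F}) s :
  s != [::] -> cf_value (f :: s) = polyF f + (cf_value s)^-1.
Proof. by case: s. Qed.

Lemma cf_form_nil (F : fieldType) p n (q : nat -> {poly F}) a :
  cf_form p n q a != [::].
Proof. by rewrite /cf_form; case: (map _ _). Qed.

Lemma deriv_compXp (F : fieldType) (p : nat) (hp : p \in [pchar F]) (q : {poly F}) :
  (q \Po 'X^p)^`() = 0.
Proof.
rewrite deriv_comp derivXn -mulr_natr -polyC_natr (pcharf0 hp) polyC0.
by rewrite !mulr0.
Qed.




Lemma rep_form (F : fieldType) (p : nat) (hp : p \in [pchar F]) n :
  forall (q : nat -> {poly F}) a, a != 0 ->
  exists N D c, [/\ D != 0, c != 0, W N D = c%:P &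
     cf_value (cf_form p n q a) = polyF N / polyF D].
Proof.
elim: n => [|n IH] q a ha.
  exists (q 0%N \Po 'X^p + a *: 'X), 1, a; split => //.
  - exact: oner_neq0.
  - by rewrite /W derivD deriv_compXp // derivZ derivX derivC add0r mulr0 subr0 mulr1 alg_polyC.
  - by rewrite /cf_form /= /polyF tofrac1 divr1.
have [N [D [c [hD hc hW hv]]]] := IH (fun i => q i.+1) a ha.
have hN : N != 0.
  apply: contra hc => /eqP N0; move: hW; rewrite N0 /W deriv0 !mul0r subr0.
  by move/esym/eqP; rewrite polyC_eq0.
exists ((q 0%N \Po 'X^p) * N + D), N, (- c); split => //.
- by rewrite oppr_eq0.
- rewrite polyCN -hW /W derivD derivM deriv_compXp // mul0r add0r.
  move: (q 0%N \Po 'X^p) (N^`()) (D^`()) => f N1 D1. ring.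
- rewrite cf_form_S cf_value_cons ?cf_form_nil // hv /polyF tofracD tofracM.
  have hN' : FracField.tofrac N != 0 by rewrite tofrac_eq0.
  have hD' : FracField.tofrac D != 0 by rewrite tofrac_eq0.
  move: (FracField.tofrac (q 0%N \Po 'X^p)) (FracField.tofrac N) (FracField.tofrac D) hN' hD' => f x y hx hy.
  rewrite invf_div mulrDl (mulfK hx). reflexivity.
Qed.




Lemma div_eq_cross (K : fieldType) (x1 y1 x2 y2 : K) :
  y1 != 0 -> y2 != 0 -> x1 / y1 = x2 / y2 -> x1 * y2 = x2 * y1.
Proof.
move=> h1 h2 e.
have := congr1 (fun t => t * (y1 * y2)) e => /=.
rewrite mulrA (mulfVK h1) [y1 * y2]mulrC mulrA (mulfVK h2) => ->.
done.
Qed.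

Arguments div_eq_cross {K x1 y1 x2 y2}.

Lemma key_ident (K : comRingType) (n1 d1 n1' d1' n' e' n'' e'' : K) :
  n1 * e' = n' * d1 ->
  n1' * e' + n1 * e'' = n'' * d1 + n' * d1' ->
  (n'' * e' - n' * e'') * d1 ^+ 2 = (n1' * d1 - n1 * d1') * e' ^+ 2.
Proof.
move=> h1 h2.
have E : (n'' * e' - n' * e'') * d1 ^+ 2 - (n1' * d1 - n1 * d1') * e' ^+ 2
   = (d1 * e'' + d1' * e') * (n1 * e' - n' * d1)
     - d1 * e' * (n1' * e' + n1 * e'' - (n'' * d1 + n' * d1')) by ring.
apply/eqP; rewrite -subr_eq0 E h1 h2 !subrr !mulr0 subrr eqxx.
exact: isT.
Qed.

Arguments key_ident {K n1 d1 n1' d1' n' e' n'' e''}.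

Lemma nocrit_of_rep (F : fieldType) (N D : {poly F}) (c0 : F) :
  D != 0 -> c0 != 0 -> W N D = c0%:P ->
  forall x, ~ finite_critical_point (polyF N / polyF D) x.
Proof.
move=> hD hc hW x [a [b [c [d [N' [D' [hdet hden hmob hDx hder]]]]]]].
have hDF : polyF D != 0 by rewrite /polyF tofrac_eq0.
have hD'0 : D' != 0 by apply: contraNneq hDx => ->; rewrite horner0.
have hD'F : polyF D' != 0 by rewrite /polyF tofrac_eq0.
pose N1 := a%:P * N + b%:P * D.
pose D1 := c%:P * N + d%:P * D.
have gen : forall u v : F, polyF u%:P * (polyF N / polyF D) + polyF v%:P
    = polyF (u%:P * N + v%:P * D) / polyF D.
  move=> u v; rewrite /polyF tofracD !tofracM mulrDl mulrA (mulfK hDF).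
  done.
have hD1F : polyF D1 != 0.
  apply: contraNneq hden => h; rewrite gen -/D1 h mul0r; done.
have hD10 : D1 != 0 by apply: contraNneq hD1F => ->; rewrite /polyF tofrac0.
move: hmob; rewrite /mobius_comp !gen -/N1 -/D1.
rewrite invf_div mulrA (mulfVK hDF) => hmob.
have hcross : N1 * D' = N' * D1.
  apply/eqP; rewrite -tofrac_eq tofracM tofracM; apply/eqP.
  exact: (div_eq_cross hD1F hD'F hmob).
have hWN1 : W N1 D1 = ((a * d - b * c) * c0)%:P.
  rewrite polyCM -hW /W /N1 /D1 !derivD !derivM !derivC polyCB !polyCM.
  move: (a%:P) (b%:P) (c%:P) (d%:P) (N^`()) (D^`()) => A B C E N2 D2.
  ring.
have hd := congr1 deriv hcross.
rewrite !derivM in hd.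
rewrite /W in hWN1.
move: (congr1 (fun P => P.[x]) hcross) (congr1 (fun P => P.[x]) hd)
      (congr1 (fun P => P.[x]) hWN1) => /= e1 e2 e3.
rewrite !hornerE in e1 e2 e3.
have K := key_ident e1 e2.
have hx2 : D'.[x] ^+ 2 != 0 by rewrite expf_neq0.
move: hder => /eqP; rewrite mulf_eq0 invr_eq0 => /orP [/eqP h0|h2]; last first.
  by move: hx2; rewrite h2.
rewrite e3 h0 mul0r in K.
move/esym/eqP: K; rewrite !mulf_eq0 (negbTE hDx) (negbTE hdet) (negbTE hc); done.
Qed.




Lemma main_rec (F : fieldType) (p : nat) (hp : p \in [pchar F]) k :
  forall (N D : {poly F}) (c : F), (size D <= k)%N -> D != 0 -> c != 0 ->
  W N D = c%:P ->
  exists n (q : nat -> {poly F}) a, a != 0 /\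
   [/\ polyF N / polyF D = cf_value (cf_form p n q a),
       forall i, (0 < i < size (cf_form p n q a))%N ->
                 (1 < size (nth 0%R (cf_form p n q a) i))%N
     & (size D < size N)%N -> (1 < size (nth 0%R (cf_form p n q a) 0))%N].
Proof.
elim: k => [|k IH] N D c hs hD hc hW.
  by move: hD; rewrite -size_poly_eq0; move: hs; case: (size D).
have hf0s : (size D < size N)%N -> (1 < size (N %/ D)%R)%N.
  move=> h; rewrite size_divp //.
  have : (0 < size D)%N by rewrite size_poly_gt0.
  set sN := size N in h *; set sD := size D in h *; lia.
have hR : (size (N %% D)%R < size D)%N by rewrite ltn_modp.
have hN := divp_eq N D.
move: (N %/ D) (N %% D) hN hR hf0s => f0 R hN hR hf0s.
subst N.
have hWe : W (f0 * D + R) D = f0^`() * D ^+ 2 + W R D.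
  rewrite /W derivD derivM. move: (f0^`()) (D^`()) (R^`()) => f1 D1 R1. ring.
have hDF : polyF D != 0 by rewrite /polyF tofrac_eq0.
have [R0|RN0] := eqVneq R 0.
- subst R.
  have hWR0: W 0 D = 0 by rewrite /W deriv0 !mul0r subrr.
  rewrite hWR0 !addr0 in hWe hW.
  have hf1 : f0^`() * D ^+ 2 = c%:P by rewrite -hWe -hW.
  have hf1n : f0^`() != 0.
    apply/eqP => h. move: hf1; rewrite h mul0r => /esym/eqP.
    by rewrite polyC_eq0 (negbTE hc).
  have hsD : size D = 1%N.
    have := congr1 (fun r : {poly F} => size r) hf1; rewrite expr2 !size_mul ?mulf_neq0 // size_polyC hc.
    have : (0 < size f0^`())%N by rewrite size_poly_gt0.
    have : (0 < size D)%N by rewrite size_poly_gt0.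
    simpl; set sD := size D; set sf := size f0^`(); lia.
  have eD := size1_polyC (eq_leq hsD).
  set d := D`_0 in eD.
  have hd : d != 0 by move: hD; rewrite eD polyC_eq0.
  have hd2 : d ^+ 2 != 0 by rewrite expf_neq0.
  have hf1' : f0^`() = (c / d ^+ 2)%:P.
    apply: (@mulIf _ (d ^+ 2)%:P); first by rewrite polyC_eq0.
    by rewrite -polyCM mulfVK // -hf1 eD polyC_exp.
  have [qq hqq] := @charp_poly F p hp f0 _ hf1'.
  have hf0n : f0 != 0 by apply: contraNneq hf1n => ->; rewrite deriv0.
  exists 0%N, (fun _ => qq), (c / d ^+ 2); split.
    by rewrite mulf_neq0 ?invr_eq0.
  have hform : cf_form p 0 (fun _ => qq) (c / d ^+ 2) = [:: f0].
    by rewrite /cf_form /= hqq.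
  rewrite hform; split.
  + by rewrite /= addr0 /polyF tofracM mulfK.
  + by move=> [|i] //=; case: i.
  + rewrite /= addr0 size_mul // hsD => h. set sf := size f0 in h *; lia.
- have hsR : (0 < size R)%N by rewrite size_poly_gt0.
  have hf1 : f0^`() = 0.
    apply/eqP/negPn/negP => hne.
    have e : f0^`() * D ^+ 2 = c%:P - W R D by rewrite -hW hWe addrK.
    have s1 := congr1 (fun r : {poly F} => size r) e.
    rewrite expr2 !size_mul ?mulf_neq0 // in s1.
    have dR := lt_size_deriv RN0.
    have dD := lt_size_deriv hD.
    have a1 : (size (R^`() * D)%R <= size R + size D - 2)%N.
      apply: leq_trans (size_polyMleq _ _) _. set sR := size R in dR *; set sD := size D in dD *; set sR1 := size R^`() in dR *; lia.
    have a2 : (size (R * D^`())%R <= size R + size D - 2)%N.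
      apply: leq_trans (size_polyMleq _ _) _. set sR := size R in dR *; set sD := size D in dD *; set sD1 := size D^`() in dD *; lia.
    have a3 : (size (W R D) <= size R + size D - 2)%N.
      rewrite /W; apply: leq_trans (size_polyD _ _) _.
      by rewrite size_polyN geq_max a1 a2.
    have a4 : (size (c%:P - W R D)%R <= maxn 1 (size (W R D)))%N.
      by apply: leq_trans (size_polyD _ _) _; rewrite size_polyN size_polyC hc.
    have : (0 < size f0^`())%N by rewrite size_poly_gt0.
    set sR := size R in hR hsR a3 *; set sD := size D in hR a3 s1 *; set sW := size (W R D) in a3 a4 *; set sf := size f0^`() in s1 *; set sc := size (c%:P - W R D) in s1 a4 *; lia.
  have hWRD : W D R = (- c)%:P.
    rewrite polyCN -hW hWe hf1 mul0r add0r /W.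
    move: (D^`()) (R^`()) => D1 R1. ring.
  have hsk : (size R <= k)%N by set sR := size R in hR *; set sD := size D in hR hs *; lia.
  have hc' : - c != 0 by rewrite oppr_eq0.
  have [n [q [a [ha [hv hent hhead]]]]] := IH D R (- c) hsk RN0 hc' hWRD.
  have hf1' : f0^`() = 0%:P by rewrite hf1 polyC0.
  have [q0 hq0] := @charp_poly F p hp f0 0 hf1'.
  rewrite scale0r addr0 in hq0.
  exists n.+1, (fun i => if i is j.+1 then q j else q0), a; split; first exact: ha.
  rewrite cf_form_S.
  change (cf_form p n (fun i => q i) a) with (cf_form p n q a).
  split.
  + rewrite cf_value_cons ?cf_form_nil // -hv -hq0 /polyF tofracD tofracM.
    have hRF : FracField.tofrac R != 0 by rewrite tofrac_eq0.
    have hDF' : FracField.tofrac D != 0 by rewrite tofrac_eq0.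
    move: (FracField.tofrac f0) (FracField.tofrac R) (FracField.tofrac D) hRF hDF'
      => f x y hx hy.
    rewrite invf_div mulrDl (mulfK hy). reflexivity.
  + move=> [|[|i]] //= hi; first exact: hhead hR.
    apply: hent. move: hi => /=. lia.
  + by move=> h; rewrite -hq0; exact: hf0s h.
Qed.




Lemma frac_rep (R : idomainType) (phi : {fraction R}) :
  exists n d : R, d != 0 /\ phi = (FracField.tofrac n) / (FracField.tofrac d).
Proof.
set x := repr phi.
have hd := denom_ratioP x.
exists (\n_x), (\d_x); split => //.
have hd' : FracField.tofrac (\d_x) != 0 by rewrite tofrac_eq0.
apply: (mulfI hd'). rewrite mulrCA mulfV // mulr1.
rewrite -[phi]reprK -/x.
unlock FracField.tofrac.
rewrite -[_ * _](FracField.pi_mul (Ratio \d_x 1) x). apply/eqmodP; rewrite /= FracField.equivfE /FracField.mulf !numden_Ratio ?mulf_neq0 ?oner_neq0 //.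
by rewrite mulr1 mul1r.
Qed.

Lemma coprime_rep (F : fieldType) (phi : ratfun F) :
  exists N D : {poly F}, [/\ D != 0, coprimep N D & phi = polyF N / polyF D].
Proof.
have [n [d [hd ->]]] := @frac_rep _ phi.
set g := gcdp n d.
have hg : g != 0 by rewrite gcdp_eq0 negb_and hd orbT.
have en : n = (n %/ g) * g by rewrite divpK // dvdp_gcdl.
have ed : d = (d %/ g) * g by rewrite divpK // dvdp_gcdr.
have hD : d %/ g != 0.
  by apply: contraNneq hd => h; rewrite ed h mul0r.
exists (n %/ g), (d %/ g); split => //.
  by apply: coprimep_div_gcd; rewrite hd orbT.
have hgF : FracField.tofrac g != 0 by rewrite tofrac_eq0.
rewrite /polyF {1}en {1}ed !tofracM.
move: (FracField.tofrac (n %/ g)) (FracField.tofrac (d %/ g)) hgF => u v hv.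
by rewrite invfM mulrACA mulfV // mulr1.
Qed.




Theorem theorem1p1 (F : closedFieldType) (p : nat) (hp : p \in [pchar F])
    (phi : ratfun F) :
  (forall x : F, ~ finite_critical_point phi x) <->
  exists (n : nat) (q : nat -> {poly F}) (a : F),
    a != 0 /\ cf_expansion phi (cf_form p n q a).
Proof.
split; last first.
  move=> [n [q [a [ha [_ _ hphi]]]]].
  have [N [D [c [hD hc hW hv]]]] := @rep_form F p hp n q a ha.
  rewrite hphi hv; exact: nocrit_of_rep hD hc hW.
move=> hnc.
have [N [D [hD hcop hphi]]] := @coprime_rep F phi.
have hDF : polyF D != 0 by rewrite /polyF tofrac_eq0.
have hs1 : size (W N D) == 1%N.
  apply/negPn/negP => /closed_rootP [x hx].
  move: hx; rewrite /root /W hornerD hornerN !hornerM => /eqP hx.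
  have [hDx|hDx] := eqVneq D.[x] 0; last first.
    apply: (hnc x); exists 1, 0, 0, 1, N, D; split.
    - by rewrite mulr1 mulr0 subr0 oner_neq0.
    - by rewrite /polyF polyC0 polyC1 tofrac0 tofrac1 mul0r add0r oner_neq0.
    - by rewrite /mobius_comp /polyF polyC0 polyC1 tofrac0 tofrac1 mul1r addr0 mul0r add0r divr1 hphi.
    - exact: hDx.
    - by rewrite hx mul0r.
  have hNx : N.[x] != 0.
    by apply: (coprimep_root (p := D)); [rewrite coprimep_sym | rewrite /root hDx].
  have hN : N != 0 by apply: contraNneq hNx => ->; rewrite horner0.
  have hNF : polyF N != 0 by rewrite /polyF tofrac_eq0.
  have hD1 : (D^`()).[x] = 0.
    move: hx; rewrite hDx mulr0 sub0r => /eqP; rewrite oppr_eq0 mulf_eq0 (negbTE hNx) /=.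
    by move/eqP.
  apply: (hnc x); exists 0, 1, 1, 0, D, N; split; [ | | | exact: hNx | ].
  - by rewrite mulr0 mulr1 sub0r oppr_eq0 oner_neq0.
  - rewrite /polyF polyC0 polyC1 tofrac0 tofrac1 mul1r addr0 hphi. apply: mulf_neq0; first exact: hNF. rewrite invr_eq0. exact: hDF.
  - by rewrite /mobius_comp /polyF polyC0 polyC1 tofrac0 tofrac1 mul1r addr0 mul0r add0r div1r hphi invf_div.
  - by rewrite hD1 hDx !mul0r subrr mul0r.
have eW := size1_polyC (eq_leq (eqP hs1)).
set c := (W N D)`_0 in eW.
have hc : c != 0 by move: hs1; rewrite eW size_polyC; case: (c != 0).
have [n [q [a [ha [hv hent _]]]]] := @main_rec F p hp (size D) N D c (leqnn _) hD hc eW.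
exists n, q, a; split; first exact: ha.
split; [by rewrite size_rcons | exact: hent | by rewrite hphi].
Qed.
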